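(* Fix $B\in\mathbb N$ and allocation functions $w_j$, $j\in[B]$, where $w_j$ maps $\mu^{j-1}=(\mu_1,\dots,\mu_{j-1})\in((\Delta_{\mathcal X})^K)^{j-1}$ to $\Delta_K$ ($w_1$ a constant). Consider the batched sampling scheme with horizon $T$: in batch $j=1,\dots,B$ each arm $a$ is pulled exactly $w_j(a)(Q^{j-1})\,T/B$ times (horizons $T$ are restricted to those for which these counts are integers), each pull of arm $a$ yields an independent sample from $\nu_a$, and $Q_{j,a}$ is the empirical distribution of the samples of arm $a$ in batch $j$ (a fixed arbitrary distribution if there are none), $Q_j=(Q_{j,a})_a$, $Q^j=(Q_1,\dots,Q_j)$. Then for every set $\Gamma\subseteq((\Delta_{\mathcal X})^K)^B$, $$\liminf_{T\to\infty}-\frac1T\log P_\nu\big[Q^B\in\Gamma\big]\ \ge\ \inf_{\mu^B\in\bar\Gamma}\ \frac1B\sum_{j=1}^B\sum_{a=1}^Kw_j(a)(\mu^{j-1})\,D(\mu_{j,a}\|\nu_a),$$ where $\bar\Gamma$ is the closure of $\Gamma$ and $\mu^B=(\mu_1,\dots,\mu_B)$ with $\mu_j=(\mu_{j,a})_a$.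
   Context: $\mathcal X$ is a finite set, $\Delta_{\mathcal X}$ the probability distributions on $\mathcal X$, $\Delta_K$ the simplex on $[K]$, $D$ the KL divergence. $\nu=(\nu_a)_{a\in[K]}$ is a bandit with each $\nu_a\in\Delta_{\mathcal X}$ having full support on $\mathcal X$; $P_\nu$ denotes the law of the sampling scheme under $\nu$. *)

(* Defs.v *)
From mathcomp Require Import all_boot all_order all_algebra.
From mathcomp Require Import all_classical all_reals all_analysis.
Set Implicit Arguments. Unset Strict Implicit. Unset Printing Implicit Defensive.
Import Order.TTheory GRing.Theory Num.Theory.
Import numFieldNormedType.Exports.
Local Open Scope ring_scope.
Local Open Scope classical_set_scope.

Notation config R X K B := {ptws 'I_B -> {ptws 'I_K -> {ptws X -> R}}}.

Section Batched.
Variables (R : realType) (X : finType) (K B : nat).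

Definition is_dist (p : X -> R) : Prop := (forall x, 0 <= p x) /\ \sum_(x : X) p x = 1.
Definition is_simplex (p : 'I_K -> R) : Prop :=
  (forall a, 0 <= p a) /\ \sum_(a < K) p a = 1.

(* KL divergence D(p||q) = sum_x p(x) log(p(x)/q(x)), with 0 log 0 = 0
   (finite here since q has full support in our uses). *)
Definition KL (p q : X -> R) : R :=
  \sum_(x : X) (if p x == 0 then 0 else p x * ln (p x / q x)).

(* a configuration mu^B = (mu_{j,a})_{j in [B], a in [K]} in ((Delta_X)^K)^B,
   seen inside the ambient space (R^X)^K)^B with its product (= Euclidean) topology *)
Local Notation config := {ptws 'I_B -> {ptws 'I_K -> {ptws X -> R}}}.
Definition is_config (mu : config) : Prop := forall j a, is_dist (mu j a).

(* allocation functions: w j maps the prefix mu^{j-1} = (mu_i)_{i < j}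
   (batches indexed from 0) to a vector indexed by arms *)
Definition alloc := forall j : 'I_B, ('I_j -> 'I_K -> X -> R) -> 'I_K -> R.

Definition prefix (j : 'I_B) (mu : 'I_B -> 'I_K -> X -> R) : 'I_j -> 'I_K -> X -> R :=
  fun i => mu (widen_ord (ltnW (ltn_ord j)) i).
Arguments prefix : clear implicits.

Definition rate (w : alloc) (nu : 'I_K -> X -> R) (mu : config) : R :=
  B%:R^-1 * \sum_(j < B) \sum_(a < K) w j (prefix j mu) a * KL (mu j a) (nu a).

(* Outcome space: for batch j and arm a, a stack of T i.i.d. samples of nu_a;
   the pulls of arm a in batch j read the first n_{j,a} <= T entries. *)
Definition outcome (T : nat) := {ffun 'I_B -> {ffun 'I_K -> {ffun 'I_T -> X}}}.

Definition outcome_prob (nu : 'I_K -> X -> R) (T : nat) (om : outcome T) : R :=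
  \prod_(j < B) \prod_(a < K) \prod_(t < T) nu a (om j a t).

(* number of pulls (the real number w_j(a)(Q^{j-1}) T / B, rounded down;
   for admissible T it is an integer, so no rounding happens) *)
Definition pulls_real (w : alloc) (T : nat) (j : 'I_B) (h : seq ('I_K -> X -> R))
  (a : 'I_K) : R :=
  w j (fun i : 'I_j => nth (fun _ _ => 0) h i) a * T%:R / B%:R.

Definition empirical (q0 : X -> R) (T n : nat) (row : 'I_T -> X) (x : X) : R :=
  if n == 0%N then q0 x
  else (#|[set t : 'I_T | (t < n)%N && (row t == x)]|)%:R / n%:R.

Definition batch (w : alloc) (q0 : X -> R) (T : nat) (om : outcome T)
  (m : nat) (h : seq ('I_K -> X -> R)) : 'I_K -> X -> R :=
  match @insub nat (fun k => (k < B)%N) 'I_B m with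
  | Some j => fun a => empirical q0 (Num.truncn (pulls_real w T j h a)) (om j a)
  | None => fun _ _ => 0
  end.

Fixpoint history (w : alloc) (q0 : X -> R) (T : nat) (om : outcome T) (m : nat)
  : seq ('I_K -> X -> R) :=
  match m with
  | 0%N => [::]
  | m'.+1 => let h := history w q0 om m' in rcons h (batch w q0 om m' h)
  end.

Definition QB (w : alloc) (q0 : X -> R) (T : nat) (om : outcome T) : config :=
  fun j => nth (fun _ _ => 0) (history w q0 om B) j.

Definition admissible (w : alloc) (q0 : X -> R) (T : nat) : Prop :=
  forall (om : outcome T) (j : 'I_B) (a : 'I_K),
    pulls_real w T j (history w q0 om j) a \is a Num.nat.

Definition probQ (w : alloc) (q0 : X -> R) (nu : 'I_K -> X -> R) (T : nat)
  (Gamma : set config) : R :=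
  \sum_(om : outcome T | `[< Gamma (QB w q0 om) >]) outcome_prob nu om.

(* -(1/T) log P_nu[Q^B in Gamma] in the extended reals (+oo if the probability is 0);
   non-admissible horizons (and T = 0) are assigned +oo, so that the liminf of this
   sequence over all T is the liminf over admissible horizons. *)
Definition neg_log_rate (w : alloc) (q0 : X -> R) (nu : 'I_K -> X -> R)
  (Gamma : set config) (T : nat) : \bar R :=
  if `[< admissible w q0 T >] && (0 < T)%N then
    let p := probQ w q0 nu T Gamma in
    if p == 0 then +oo%E else (- (T%:R^-1 * ln p))%:E
  else +oo%E.

End Batched.

(* Main.v *)
Require Import Defs.
From mathcomp Require Import all_boot all_order all_algebra.
From mathcomp Require Import all_classical all_reals all_analysis.
From mathcomp Require Import ring lra.
Import Order.TTheory GRing.Theory Num.Theory.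
Import numFieldNormedType.Exports.
Local Open Scope ring_scope.
Local Open Scope classical_set_scope.
Set Implicit Arguments. Unset Strict Implicit. Unset Printing Implicit Defensive.

Section P.
Variables (R : realType) (X : finType) (K B : nat).
Variables (nu : 'I_K -> X -> R) (w : alloc R X K B) (q0 : X -> R) (T : nat).

Local Notation dflt := (fun (_ : 'I_K) (_ : X) => (0:R)).

Lemma history_size (om : outcome X K B T) m : size (history w q0 om m) = m.
Proof. by elim: m => //= m IH; rewrite size_rcons IH. Qed.

Lemma history_nth (om : outcome X K B T) m i : (i < m)%N ->
  nth dflt (history w q0 om m) i = batch w q0 om i (history w q0 om i).
Proof.
elim: m => // m IH; rewrite ltnS leq_eqVlt => /orP[/eqP->|im] /=.
  by rewrite nth_rcons history_size ltnn eqxx.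
by rewrite nth_rcons history_size im IH.
Qed.

Definition cnt n (row : 'I_T -> X) (x : X) : nat :=
  #|[set t : 'I_T | (t < n)%N && (row t == x)]|.

Definition nja (om : outcome X K B T) (j : 'I_B) (a : 'I_K) : nat :=
  Num.truncn (pulls_real w T j (history w q0 om j) a).

Lemma QB_E (om : outcome X K B T) (j : 'I_B) :
  QB w q0 om j = fun a => empirical q0 (nja om j a) (om j a).
Proof.
rewrite /QB history_nth // /batch.
by case: insubP => [j' _ /val_inj -> //|]; rewrite ltn_ord.
Qed.

Lemma prefix_E (om : outcome X K B T) (j : 'I_B) :
  Defs.prefix (j:=j) (QB w q0 om) = (fun i : 'I_j => nth dflt (history w q0 om j) i).
Proof.
apply: funext => i; rewrite /Defs.prefix /QB /= !history_nth //.
exact: ltn_trans (ltn_ord i) (ltn_ord j).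
Qed.


Definition code (om : outcome X K B T) : {ffun 'I_B -> {ffun 'I_K -> {ffun X -> 'I_T.+1}}} :=
  [ffun j => [ffun a => [ffun x => inord (cnt (nja om j a) (om j a) x)]]].

Lemma cnt_le n row x : (cnt n row x <= T)%N.
Proof. by rewrite /cnt -[X in (_ <= X)%N]card_ord max_card. Qed.

Lemma code_cnt (om om' : outcome X K B T) j a x : code om = code om' ->
  cnt (nja om j a) (om j a) x = cnt (nja om' j a) (om' j a) x.
Proof.
move=> Hc; have := congr1 (fun c : {ffun 'I_B -> {ffun 'I_K -> {ffun X -> 'I_T.+1}}} => nat_of_ord (c j a x)) Hc.
by rewrite /= !ffunE !inordK // ltnS cnt_le.
Qed.

Lemma code_hist (om om' : outcome X K B T) : code om = code om' ->
  forall m, history w q0 om m = history w q0 om' m.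
Proof.
move=> Hc; elim => //= m IH; rewrite IH; congr rcons; rewrite /batch.
case: insubP => // j _ jm; apply: funext => a; apply: funext => x.
have jm' : nat_of_ord j = m := jm.
have e := code_cnt j a x Hc; rewrite /cnt /nja jm' IH in e.
by rewrite /empirical e.
Qed.

Lemma code_nja (om om' : outcome X K B T) j a : code om = code om' ->
  nja om j a = nja om' j a.
Proof. by move=> Hc; rewrite /nja (code_hist Hc). Qed.


Lemma sum_cnt n (r : 'I_T -> X) (f : X -> R) :
  \sum_(t < T | (t < n)%N) f (r t) = \sum_x (cnt n r x)%:R * f x.
Proof.
rewrite (partition_big r xpredT) //=; apply: eq_bigr => x _.
rewrite (eq_bigr (fun=> f x)); last by move=> t /andP[_ /eqP->].
rewrite (eq_bigl (mem [set t : 'I_T | (t < n)%N && (r t == x)])).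
  by rewrite sumr_const mulr_natl; congr (_ *+ _); apply: eq_card => t.
by move=> t /=; apply/idP/idP => [h|/set_mem //]; apply: mem_set.
Qed.


Lemma card_lt n : (#|[pred t : 'I_T | (t < n)%N]| <= n)%N.
Proof.
case: n => [|n]; first by rewrite leqn0; apply/eqP; apply: eq_card0 => t.
rewrite -[X in (_ <= X)%N]card_ord.
apply: (@leq_card_in _ _ (fun t : 'I_T => (inord t : 'I_n.+1))) => t1 t2.
rewrite !inE => h1 h2 /(congr1 val); rewrite /= !inordK // => e.
exact: val_inj.
Qed.

Lemma sum_cnt_le n (r : 'I_T -> X) : \sum_x (cnt n r x)%:R <= n%:R :> R.
Proof.
rewrite (eq_bigr (fun x => (cnt n r x)%:R * 1)); last by move=> x _; rewrite mulr1.
rewrite -(sum_cnt n r (fun _ => 1)).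
rewrite (_ : \sum_(t < T | (t < n)%N) (1:R) = (#|[pred t : 'I_T | (t < n)%N]|)%:R).
  by rewrite ler_nat card_lt.
by rewrite -sum1_card natr_sum.
Qed.


Lemma row_bound (p : X -> R) (hp : is_dist p) (hpos : forall x, 0 < p x) n
  (r0 : 'I_T -> X) :
  \sum_(r : {ffun 'I_T -> X} | [forall x, cnt n r x == cnt n r0 x])
     \prod_(t < T) p (r t)
  <= expR (- (n%:R * KL (empirical q0 n r0) p)).
Proof.
have Hsub (g : 'I_T -> X -> R) : (forall t x, 0 <= g t x) ->
   \sum_(r : {ffun 'I_T -> X} | [forall x, cnt n r x == cnt n r0 x])
      \prod_(t < T) g t (r t) <= \prod_(t < T) \sum_x g t x.
  move=> g0; rewrite bigA_distr_bigA [leLHS]big_mkcond /=; apply: ler_sum => r _.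
  by case: ifP => _ //; apply: prodr_ge0 => t _; exact: g0.
case: hp => hp0 hp1.
case: (posnP n) => [n0|n0].
  subst n; rewrite mul0r oppr0 expR0.
  have /= H := Hsub (fun _ x => p x) (fun _ x => hp0 x).
  apply: le_trans H _.
  by rewrite (eq_bigr (fun=> 1)) ?prodr_const ?expr1n.
set q := empirical q0 n r0.
have qE x : q x = (cnt n r0 x)%:R / n%:R by rewrite /q /empirical gtn_eqF.
have qge0 x : 0 <= q x by rewrite qE divr_ge0.
have nn0 : n%:R != 0 :> R by rewrite pnatr_eq0 -lt0n.
pose g (t : 'I_T) x := if (t < n)%N then q x else p x.
have key r : [forall x, cnt n r x == cnt n r0 x] ->
    \prod_(t < T) p (r t) = expR (- (n%:R * KL q p)) * \prod_(t < T) g t (r t).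
  move=> /forallP hr.
  have hc x : cnt n r x = cnt n r0 x by apply/eqP.
  rewrite (bigID (fun t : 'I_T => (t < n)%N)) [X in _ = _ * X](bigID (fun t : 'I_T => (t < n)%N)) /=.
  rewrite mulrA; congr (_ * _); last by apply: eq_bigr => t /negbTE ht; rewrite /g ht.
  rewrite (eq_bigr (fun t : 'I_T => q (r t) * expR (ln (p (r t) / q (r t))))); last first.
    move=> t ht; have qpos : 0 < q (r t).
      rewrite qE divr_gt0 // ?ltr0n // -hc; apply/card_gt0P; exists t.
      by apply: mem_set; rewrite /= ht eqxx.
    by rewrite lnK ?posrE ?divr_gt0 // mulrC divfK // gt_eqF.
  rewrite big_split /= -expR_sum mulrC; congr (_ * _); last first.
    by apply: eq_bigr => t ht; rewrite /g ht.
  congr expR; rewrite (sum_cnt n r (fun x => ln (p x / q x))) /KL mulr_sumr -sumrN; apply: eq_bigr => x _.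
  rewrite hc; case: eqP => [qx0|/eqP qx0].
    move: qx0; rewrite qE => /eqP; rewrite mulf_eq0 invr_eq0 (negbTE nn0) orbF.
    by move=> /eqP ->; rewrite mul0r mulr0 oppr0.
  have qpos : 0 < q x by rewrite lt_neqAle eq_sym qx0 qge0.
  have nq : n%:R * q x = (cnt n r0 x)%:R by rewrite qE mulrC divfK.
  have lnq : ln (q x / p x) = - ln (p x / q x).
    by rewrite -lnV ?invf_div // posrE divr_gt0.
  by rewrite mulrA nq lnq mulrN opprK.
rewrite (eq_bigr (fun r : {ffun 'I_T -> X} => expR (- (n%:R * KL q p)) * \prod_(t < T) g t (r t))); last first.
  by move=> r; exact: key.
rewrite -mulr_sumr; apply: le_trans (ler_wpM2l (expR_ge0 _) (Hsub g _)) _.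
  by move=> t x; rewrite /g; case: ifP.
apply: ler_piMr; first exact: expR_ge0.
apply: prodr_ile1 => t _; rewrite /g; case: (t < n)%N; last by rewrite hp1 ler01 lexx.
apply/andP; split; first by apply: sumr_ge0.
rewrite (eq_bigr (fun x => (cnt n r0 x)%:R / n%:R)) // -mulr_suml ler_pdivrMr ?ltr0n // mul1r.
exact: sum_cnt_le.
Qed.


Definition good (om0 om : outcome X K B T) : bool :=
  [forall j, [forall a, [forall x,
     cnt (nja om0 j a) (om j a) x == cnt (nja om0 j a) (om0 j a) x]]].

Lemma sum_good (om0 : outcome X K B T) :
  \sum_(om : outcome X K B T | good om0 om) outcome_prob nu om =
  \prod_(j < B) \prod_(a < K)
    \sum_(r : {ffun 'I_T -> X} | [forall x, cnt (nja om0 j a) r x == cnt (nja om0 j a) (om0 j a) x])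
      \prod_(t < T) nu a (r t).
Proof.
apply/esym; under eq_bigr do rewrite bigA_distr_big_dep.
rewrite bigA_distr_big_dep; apply: eq_big => // om.
Qed.


Lemma sum_sub (I : finType) (P Q : pred I) (f : I -> R) :
  (forall i, 0 <= f i) -> (forall i, P i -> Q i) ->
  \sum_(i | P i) f i <= \sum_(i | Q i) f i.
Proof.
move=> f0 PQ; rewrite big_mkcond [leRHS]big_mkcond; apply: ler_sum => i _.
by case: ifP => [/PQ ->|_] //; case: ifP.
Qed.

Lemma prob_code (hnu : forall a, is_dist (nu a)) (hnu_full : forall a x, 0 < nu a x)
  (hadm : admissible w q0 T) (om0 : outcome X K B T) :
  \sum_(om | code om == code om0) outcome_prob nu om
  <= expR (- (T%:R * rate w nu (QB w q0 om0))).
Proof.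
have pr0 (om : outcome X K B T) : 0 <= outcome_prob nu om.
  by apply: prodr_ge0 => j _; apply: prodr_ge0 => a _; apply: prodr_ge0 => t _; apply: ltW.
apply: le_trans (@sum_sub {ffun 'I_B -> {ffun 'I_K -> {ffun 'I_T -> X}}} (fun om => code om == code om0) (good om0) _ pr0 _) _.
  move=> om /eqP Hc; apply/forallP => j; apply/forallP => a; apply/forallP => x.
  by rewrite -{1}(code_nja j a Hc) (code_cnt j a x Hc).
rewrite sum_good.
apply: le_trans (_ : _ <= \prod_(j < B) \prod_(a < K)
   expR (- ((nja om0 j a)%:R * KL (empirical q0 (nja om0 j a) (om0 j a)) (nu a)))) _.
  apply: ler_prod => j _; apply/andP; split.
    by apply: prodr_ge0 => a _; apply: sumr_ge0 => r _; apply: prodr_ge0 => t _; apply: ltW.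
  apply: ler_prod => a _; apply/andP; split.
    by apply: sumr_ge0 => r _; apply: prodr_ge0 => t _; apply: ltW.
  exact: row_bound.
under eq_bigr do rewrite -expR_sum.
rewrite -expR_sum le_eqVlt; apply/orP; left; apply/eqP; congr expR.
rewrite /rate mulrA -mulNr !mulr_sumr; apply: eq_bigr => j _.
rewrite mulr_sumr; apply: eq_bigr => a _.
rewrite (truncnK (hadm om0 j a)) /pulls_real QB_E prefix_E.
ring.
Qed.


Lemma probQ_le (hnu : forall a, is_dist (nu a)) (hnu_full : forall a x, 0 < nu a x)
  (hadm : admissible w q0 T) (Gamma : set (config R X K B)) (r : R)
  (hr : forall mu, Gamma mu -> r <= rate w nu mu) :
  probQ w q0 nu T Gamma <= (T.+1%:R) ^+ (#|X| * K * B) * expR (- (T%:R * r)).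
Proof.
have pr0 (om : outcome X K B T) : 0 <= outcome_prob nu om.
  by apply: prodr_ge0 => j _; apply: prodr_ge0 => a _; apply: prodr_ge0 => t _; apply: ltW.
rewrite /probQ (partition_big code xpredT) //=.
apply: le_trans (_ : _ <= \sum_(c : {ffun 'I_B -> {ffun 'I_K -> {ffun X -> 'I_T.+1}}}) expR (- (T%:R * r))) _.
  apply: ler_sum => c _.
  case: (pickP (fun om : outcome X K B T => `[< Gamma (QB w q0 om) >] && (code om == c))) => [om0 /andP[G0 /eqP hc]|none]; last first.
    by rewrite big_pred0 ?expR_ge0.
  apply: le_trans (@sum_sub {ffun 'I_B -> {ffun 'I_K -> {ffun 'I_T -> X}}} _ (fun om => code om == code om0) _ pr0 _) _.
    by move=> om /andP[_]; rewrite hc.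
  apply: le_trans (prob_code hnu hnu_full hadm om0) _.
  rewrite ler_expR lerN2; apply: ler_wpM2l => //; apply: hr.
  by move/asboolP: G0.
rewrite sumr_const !card_ffun !card_ord -!expnM mulnA -(mulr_natl (expR _)) natrX.
by [].
Qed.

End P.

Lemma ln_small (R : realType) (M eps : R) : 0 <= M -> 0 < eps ->
  exists N0, forall n, (N0 <= n)%N -> M * ln (n.+1%:R) / n%:R <= eps.
Proof.
move=> M0 e0; set c := 4 * M / eps.
have c0 : 0 <= c by rewrite /c; apply: divr_ge0; [lra|exact: ltW].
exists (Num.truncn (c ^+ 2)).+4 => n hn.
have hn' : c ^+ 2 + 3 <= n%:R.
  have h1 := truncnS_gt (c ^+ 2).
  have : ((Num.truncn (c ^+ 2)).+4%:R <= n%:R :> R) by rewrite ler_nat.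
  rewrite -addn3 natrD; lra.
have n0 : 0 < n%:R :> R by have := sqr_ge0 c; lra.
set s := Num.sqrt (n.+1%:R : R).
have s0 : 0 <= s by exact: sqrtr_ge0.
have ss : s ^+ 2 = n%:R + 1 by rewrite sqr_sqrtr // -addn1 natrD.
have spos : 0 < s by rewrite lt_neqAle s0 andbT; apply/eqP => h; move: ss; rewrite -h expr0n /=; lra.
have lnE : ln (n.+1%:R : R) = 2 * ln s.
  by rewrite -[in LHS]addn1 natrD -ss lnXn // mulr_natl.
have lns : ln s <= s by apply: ltW; exact: ln_sublinear.
have cs : c <= s.
  rewrite leNgt; apply/negP => h.
  have : s ^+ 2 < c ^+ 2 by rewrite ltr_pXn2r // ?nnegrE //.
  lra.
rewrite ler_pdivrMr // lnE.
have Mc : M = c * eps / 4 by rewrite /c; field; rewrite gt_eqF.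
apply: le_trans (_ : M * (2 * s) <= _).
  by apply: ler_wpM2l => //; lra.
rewrite Mc.
have : c * s <= s * s by apply: ler_wpM2r.
have : 2 <= s ^+ 2 by have := sqr_ge0 c; lra.
rewrite expr2 => h2 h3.
nra.
Qed.


Lemma liminf_geP (R : realType) (u : (\bar R)^nat) (a : \bar R) N :
  (forall n, (N <= n)%N -> (a <= u n)%E) -> (a <= limn_einf u)%E.
Proof.
move=> h; rewrite limn_einf_lim; apply: lime_ge; first exact: is_cvg_einfs.
near=> m; apply: le_ereal_inf_tmp => _ [k /= mk <-]; apply: h.
by apply: leq_trans mk; near: m; exists N.
Unshelve. all: by end_near. Qed.

Unset Implicit Arguments.
Set Strict Implicit.

Theorem mainTheorem11 (R : realType) (X : finType) (K B : nat)
  (hB : (0 < B)%N)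
  (nu : 'I_K -> X -> R)
  (hnu : forall a, is_dist (nu a))
  (hnu_full : forall a x, 0 < nu a x)
  (w : alloc R X K B)
  (hw : forall (j : 'I_B) (p : 'I_j -> 'I_K -> X -> R),
          (forall i a, is_dist (p i a)) -> is_simplex (w j p))
  (q0 : X -> R) (hq0 : is_dist q0)
  (Gamma : set (config R X K B))
  (hGamma : Gamma `<=` @is_config R X K B) :
  (ereal_inf [set (rate w nu mu)%:E | mu in closure Gamma]
     <= limn_einf (neg_log_rate w q0 nu Gamma))%E.
Proof.
suff H : forall L : \bar R, (forall mu, Gamma mu -> (L <= (rate w nu mu)%:E)%E) ->
    (L <= limn_einf (neg_log_rate w q0 nu Gamma))%E.
  apply: H => mu Gmu; apply: ereal_inf_lbound; exists mu => //.
  exact: subset_closure.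
case: (pselect (exists mu, Gamma mu)) => [[mu0 Gmu0]|Gno] L hL; last first.
  have -> : neg_log_rate w q0 nu Gamma = cst +oo%E.
    apply: funext => n; rewrite /neg_log_rate; case: ifP => // _.
    rewrite /probQ big_pred0 ?eqxx // => om; apply/asboolP => G.
    by apply: Gno; exists (QB w q0 om).
  by rewrite (cvg_limn_einf_sup (cvg_cst (+oo)%E)).1 leey.
case: L hL => [r| |] hL; last 2 first.
- by have := hL mu0 Gmu0.
- by rewrite leNye.
have hr mu : Gamma mu -> r <= rate w nu mu by move=> /hL; rewrite lee_fin.
apply/lee_subgt0Pr => e e0.
set M := (#|X| * K * B)%N.
have [N0 hN0] := @ln_small R M%:R e (ler0n _ _) e0.
apply: (@liminf_geP R _ _ (maxn N0 1)) => n; rewrite geq_max => /andP[nN0 n1].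
rewrite /neg_log_rate; case: (boolP `[< admissible w q0 n >]) => [/asboolP hadm|]; last first.
  by move=> _; rewrite leey.
rewrite n1 /=; case: eqP => [_|/eqP p0]; first by rewrite leey.
rewrite -EFinB lee_fin.
set p := probQ w q0 nu n Gamma.
have pge0 : 0 <= p.
  apply: sumr_ge0 => om _.
  by apply: prodr_ge0 => j _; apply: prodr_ge0 => a _; apply: prodr_ge0 => t _; apply: ltW.
have ppos : 0 < p by rewrite lt_neqAle eq_sym p0 pge0.
have hp : p <= (n.+1%:R) ^+ M * expR (- (n%:R * r)) := probQ_le hnu hnu_full hadm hr.
have n0 : 0 < n%:R :> R by rewrite ltr0n.
have hlnp : ln p <= M%:R * ln (n.+1%:R) - n%:R * r.
  have Npos : 0 < (n.+1%:R : R) ^+ M by apply: exprn_gt0; rewrite ltr0n.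
  rewrite -(ler_ln (x:=p)) ?posrE ?mulr_gt0 ?expR_gt0 // in hp.
  rewrite lnM ?posrE ?expR_gt0 // expRK lnXn ?ltr0n // in hp.
  by rewrite mulr_natl.
have := hN0 n nN0.
have : - (n%:R^-1 * ln p) >= n%:R^-1 * (n%:R * r - M%:R * ln (n.+1%:R)).
  rewrite -(mulrN (n%:R^-1)) ler_pM2l ?invr_gt0 //.
  lra.
rewrite mulrBr mulrA mulVf ?gt_eqF // mul1r mulrC.
lra.
Qed.
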